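(* Let $m,r$ be positive integers, let $W\in\mathbb{R}^{m\times m}$ be a fixed real symmetric matrix, $\lambda\ge 0$, $L\ge 1$, and $0<\eta\le 1/L$. Let $F(W,U):=\frac{1}{2}\|W-UU^{T}\|_{F}^{2}$ for $U\in\mathbb{R}^{m\times r}$, so that $\nabla_{U}F(W,U)=2(UU^{T}-W)U$, and let \[ \psi(U):= \frac{3}{2}\|U\|_{F}^{4}+\|W\|_{F}\|U\|_{F}^{2},\qquad \nabla\psi(U)=6\|U\|_F^2U+2\|W\|_F U. \] Given $\bar{U}\in\mathbb{R}^{m\times r}$, let \[ U^{+}=\mathrm{arg\,min}_{U\in\mathbb{R}^{m\times r}}\ \frac{\lambda}{2}\|U\|_{F}^{2} +\langle \nabla_{U}F(W,\bar{U}),U-\bar{U}\rangle +\frac{1}{\eta} D_{\psi}(U,\bar{U}). \] Set $G:=\nabla\psi(\bar{U})-\eta\nabla_{U}F(W,\bar{U})$. Then \[ U^{+}=\frac{1}{t}\,G, \] where $t\ge 0$ satisfies $t^{3}-(\lambda\eta+2\|W\|_{F})t^{2}-6\|G\|_{F}^{2}=0$.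
   Context: $\|\cdot\|_F$ is the Frobenius norm and $\langle Y_1,Y_2\rangle:=\mathrm{tr}(Y_1^{T}Y_2)$. The Bregman distance of $\psi$ is $D_{\psi}(X,Y):=\psi(X)-\psi(Y)-\langle\nabla\psi(Y),X-Y\rangle$. In the paper, $W=W^{k+1}$ and $\bar{U}=\bar{U}^{k}$ are current iterates of an alternating algorithm, $U^{+}=U^{k+1}$, $G=G^{k}$, and $t=t_k$. *)

(* Defs.v *)
From HB Require Import structures.
From mathcomp Require Import all_boot all_order all_algebra.
From mathcomp Require Import reals.
Set Implicit Arguments. Unset Strict Implicit. Unset Printing Implicit Defensive.
Import Order.TTheory GRing.Theory Num.Theory.
Local Open Scope ring_scope.

Section Defs.
Variable R : realType.

Definition frob_inner (m r : nat) (Y1 Y2 : 'M[R]_(m, r)) : R := \tr (Y1^T *m Y2).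

Definition frob_norm (m r : nat) (Y : 'M[R]_(m, r)) : R := Num.sqrt (frob_inner Y Y).

Definition Fobj (m r : nat) (W : 'M[R]_m) (U : 'M[R]_(m, r)) : R :=
  2^-1 * frob_norm (W - U *m U^T) ^+ 2.

Definition gradF (m r : nat) (W : 'M[R]_m) (U : 'M[R]_(m, r)) : 'M[R]_(m, r) :=
  2%:R *: ((U *m U^T - W) *m U).

Definition psi (m r : nat) (W : 'M[R]_m) (U : 'M[R]_(m, r)) : R :=
  3%:R / 2%:R * frob_norm U ^+ 4 + frob_norm W * frob_norm U ^+ 2.

Definition gradpsi (m r : nat) (W : 'M[R]_m) (U : 'M[R]_(m, r)) : 'M[R]_(m, r) :=
  (6%:R * frob_norm U ^+ 2) *: U + (2%:R * frob_norm W) *: U.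

Definition bregman (m r : nat) (W : 'M[R]_m) (X Y : 'M[R]_(m, r)) : R :=
  psi W X - psi W Y - frob_inner (gradpsi W Y) (X - Y).

Definition subobj (m r : nat) (W : 'M[R]_m) (lam eta : R) (Ubar U : 'M[R]_(m, r)) : R :=
  lam / 2%:R * frob_norm U ^+ 2 + frob_inner (gradF W Ubar) (U - Ubar)
  + eta^-1 * bregman W U Ubar.

End Defs.

(* Main.v *)
Require Import Defs.
From HB Require Import structures.
From mathcomp Require Import all_boot all_order all_algebra.
From mathcomp Require Import reals.
From mathcomp Require Import ring lra.
Import Order.TTheory GRing.Theory Num.Theory.
Local Open Scope ring_scope.

Section Aux.
Variable R : realType.
Variables m r : nat.
Implicit Types X Y Z : 'M[R]_(m, r).

Lemma ip_sym X Y : frob_inner X Y = frob_inner Y X.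
Proof. by rewrite /frob_inner -mxtrace_tr trmx_mul trmxK. Qed.

Lemma ipDr X Y Z : frob_inner X (Y + Z) = frob_inner X Y + frob_inner X Z.
Proof. by rewrite /frob_inner mulmxDr mxtraceD. Qed.

Lemma ipZr X a Y : frob_inner X (a *: Y) = a * frob_inner X Y.
Proof. by rewrite /frob_inner -scalemxAr mxtraceZ. Qed.

Lemma ipNr X Y : frob_inner X (- Y) = - frob_inner X Y.
Proof. by rewrite -scaleN1r ipZr mulN1r. Qed.

Lemma ipBr X Y Z : frob_inner X (Y - Z) = frob_inner X Y - frob_inner X Z.
Proof. by rewrite ipDr ipNr. Qed.

Lemma ipDl X Y Z : frob_inner (Y + Z) X = frob_inner Y X + frob_inner Z X.
Proof. by rewrite ip_sym ipDr ![frob_inner X _]ip_sym. Qed.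

Lemma ipZl X a Y : frob_inner (a *: Y) X = a * frob_inner Y X.
Proof. by rewrite ip_sym ipZr ip_sym. Qed.

Lemma ipBl X Y Z : frob_inner (Y - Z) X = frob_inner Y X - frob_inner Z X.
Proof. by rewrite ip_sym ipBr ![frob_inner X _]ip_sym. Qed.

Lemma ip_sum X : frob_inner X X = \sum_i \sum_j X j i ^+ 2.
Proof.
rewrite /frob_inner /mxtrace; apply: eq_bigr => i _; rewrite mxE.
by apply: eq_bigr => j _; rewrite mxE expr2.
Qed.

Lemma ip_ge0 X : 0 <= frob_inner X X.
Proof. by rewrite ip_sum; apply: sumr_ge0 => i _; apply: sumr_ge0 => j _; apply: sqr_ge0. Qed.

Lemma ip_eq0 X : frob_inner X X = 0 -> X = 0.
Proof.
rewrite ip_sum => /psumr_eq0P H.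
have {}H : forall i, \sum_j X j i ^+ 2 = 0.
  move=> i; apply: H => // k _; apply: sumr_ge0 => l _; apply: sqr_ge0.
apply/matrixP => j i; rewrite mxE.
have /psumr_eq0P H2 := H i.
have /eqP := H2 (fun k _ => sqr_ge0 (X k i)) j isT.
by rewrite sqrf_eq0 => /eqP.
Qed.

Lemma norm_sq X : frob_norm X ^+ 2 = frob_inner X X.
Proof. by rewrite /frob_norm sqr_sqrtr // ip_ge0. Qed.

End Aux.
Arguments ip_sym {R m r}. Arguments ipDr {R m r}. Arguments ipZr {R m r}. Arguments ipDl {R m r}. Arguments ipZl {R m r}. Arguments ipBl {R m r}. Arguments ipBr {R m r}. Arguments ip_ge0 {R m r}. Arguments ip_eq0 {R m r}. Arguments norm_sq {R m r}.

Lemma small_s (R : realFieldType) (c1 k2 k3 k4 : R) :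
  (forall s : R, 0 <= c1 * s + k2 * s ^+ 2 + k3 * s ^+ 3 + k4 * s ^+ 4) ->
  0 <= c1 -> c1 = 0.
Proof.
move=> H; rewrite le_eqVlt => /orP [/eqP -> // | c1pos].
pose K := `|k2| + `|k3| + `|k4|.
have K0 : 0 <= K by rewrite /K; have := normr_ge0 k2; have := normr_ge0 k3; have := normr_ge0 k4; lra.
pose d := K + c1.
have d0 : 0 < d by rewrite /d; lra.
pose s := - (c1 / d).
have sd : s * d = - c1 by rewrite /s mulNr divfK ?gt_eqF.
have sneg : s < 0 by rewrite /s oppr_lt0 divr_gt0.
have sge : -1 <= s.
  have : c1 / d <= 1 by rewrite ler_pdivrMr // mul1r /d; lra.
  rewrite /s; lra.
have s2 : 0 <= s ^+ 2 by apply: sqr_ge0.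
have h2 : k2 * s ^+ 2 <= `|k2| * s ^+ 2 by apply: ler_wpM2r => //; apply: ler_norm.
have h3 : k3 * s ^+ 3 <= `|k3| * s ^+ 2.
  have -> : k3 * s ^+ 3 = (k3 * s) * s ^+ 2 by rewrite exprS; ring.
  apply: ler_wpM2r => //.
  have : `|k3 * s| <= `|k3| by rewrite normrM ler_piMr // ler_norml; lra.
  have := ler_norm (k3 * s); lra.
have h4 : k4 * s ^+ 4 <= `|k4| * s ^+ 2.
  have -> : k4 * s ^+ 4 = (k4 * s ^+ 2) * s ^+ 2 by rewrite (_ : 4 = 2 + 2)%N // exprD; ring.
  apply: ler_wpM2r => //.
  have : `|k4 * s ^+ 2| <= `|k4|.
    rewrite normrM ler_piMr // normrX expr_le1 //; rewrite ler_norml; lra.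
  have := ler_norm (k4 * s ^+ 2); lra.
have key : c1 * s + K * s ^+ 2 < 0.
  have -> : c1 * s + K * s ^+ 2 = s * (c1 + K * s) by ring.
  rewrite pmulr_llt0 //.
  (* c1 + K s > 0 : (c1 + K s) d = c1 d - K c1 = c1^2 *)
  have e : (c1 + K * s) * d = c1 * c1.
    have -> : (c1 + K * s) * d = c1 * d + K * (s * d) by ring.
    by rewrite sd /d; ring.
  have : 0 < (c1 + K * s) * d by rewrite e mulr_gt0.
  by rewrite pmulr_lgt0.
have := H s; rewrite /K in key; lra.
Qed.

Lemma cubic_uniq (R : realFieldType) (a A t : R) : 0 <= a -> 0 < A -> 0 <= t ->
  t ^+ 3 - a * t ^+ 2 - 6%:R * ((a + 6%:R * A) ^+ 2 * A) = 0 -> t = a + 6%:R * A.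
Proof.
move=> a0 A0 t0 ht.
have tgta : a < t.
  rewrite ltNge; apply/negP => hta.
  have : t ^+ 2 * (t - a) <= 0 by apply: mulr_ge0_le0; [apply: sqr_ge0 | lra].
  have : 0 < 6%:R * ((a + 6%:R * A) ^+ 2 * A).
    apply: mulr_gt0 => //; apply: mulr_gt0 => //; apply: exprn_gt0; lra.
  have -> : t ^+ 2 * (t - a) = t ^+ 3 - a * t ^+ 2 by ring.
  lra.
have e : (t - (a + 6%:R * A)) * (t * (t - a) + (a + 6%:R * A) * (6%:R * A) + t * (a + 6%:R * A)) = 0.
  rewrite -ht; ring.
move/eqP: e; rewrite mulf_eq0 => /orP [/eqP e|/eqP e]; first lra.
have h1 : 0 < t * (t - a) by apply: mulr_gt0; lra.
have h2 : 0 < (a + 6%:R * A) * (6%:R * A) by apply: mulr_gt0; lra.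
have h3 : 0 <= t * (a + 6%:R * A) by apply: mulr_ge0; lra.
lra.
Qed.

Lemma subobj_exp (R : realType) (m r : nat) (W : 'M[R]_m) lam eta (Ub U : 'M[R]_(m, r)) :
  subobj W lam eta Ub U =
  lam / 2%:R * frob_inner U U + (frob_inner (gradF W Ub) U - frob_inner (gradF W Ub) Ub)
  + eta^-1 * (3%:R / 2%:R * frob_inner U U ^+ 2 + frob_norm W * frob_inner U U - psi W Ub
      - (frob_inner (gradpsi W Ub) U - frob_inner (gradpsi W Ub) Ub)).
Proof.
rewrite /subobj /bregman norm_sq ipBr ipBr.
have -> : psi W U = 3%:R / 2%:R * frob_inner U U ^+ 2 + frob_norm W * frob_inner U U.
  by rewrite /psi -norm_sq -exprM.
by [].
Qed.

Theorem proposition2 (R : realType) (m r : nat) (hm : (0 < m)%N) (hr : (0 < r)%N)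
  (W : 'M[R]_m) (hW : W^T = W) (lam L eta : R)
  (hlam : 0 <= lam) (hL : 1 <= L) (heta0 : 0 < eta) (heta1 : eta <= L^-1)
  (Ubar Uplus : 'M[R]_(m, r))
  (hmin : forall U : 'M[R]_(m, r), subobj W lam eta Ubar Uplus <= subobj W lam eta Ubar U) :
  let G := gradpsi W Ubar - eta *: gradF W Ubar in
  (exists t : R, 0 <= t /\
     t ^+ 3 - (lam * eta + 2%:R * frob_norm W) * t ^+ 2 - 6%:R * frob_norm G ^+ 2 = 0) /\
  (forall t : R, 0 <= t ->
     t ^+ 3 - (lam * eta + 2%:R * frob_norm W) * t ^+ 2 - 6%:R * frob_norm G ^+ 2 = 0 ->
     Uplus = t^-1 *: G).
Proof.
move=> G.
pose w := frob_norm W.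
have w0 : 0 <= w by rewrite /w /frob_norm sqrtr_ge0.
pose a := lam * eta + 2%:R * w.
have a0 : 0 <= a by rewrite /a; have := mulr_ge0 hlam (ltW heta0); lra.
pose A := frob_inner Uplus Uplus.
have A0 : 0 <= A by apply: ip_ge0.
pose t0 := a + 6%:R * A.
pose D := t0 *: Uplus - G.
pose gF := gradF W Ubar. pose gP := gradpsi W Ubar.
pose B := frob_inner Uplus D. pose C := frob_inner D D.
pose gFD := frob_inner gF D. pose gPD := frob_inner gP D.
pose c1 := lam * B + gFD + eta^-1 * (6%:R * A * B + 2%:R * w * B - gPD).
have etan0 : eta != 0 by rewrite gt_eqF.
have CE : C = eta * c1.
  have -> : C = t0 * B - (gPD - eta * gFD).
    by rewrite /C {1}/D ipBl ipZl /G ipBl ipZl.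
  rewrite /c1 /t0 /a; field; exact: etan0.
have hs : forall s : R, 0 <= c1 * s
   + (lam / 2%:R * C + eta^-1 * (3%:R / 2%:R * (2%:R * A * C + 4%:R * B ^+ 2) + w * C)) * s ^+ 2
   + (eta^-1 * (3%:R / 2%:R * (4%:R * B * C))) * s ^+ 3
   + (eta^-1 * (3%:R / 2%:R * C ^+ 2)) * s ^+ 4.
  move=> s; have := hmin (Uplus + s *: D).
  rewrite !subobj_exp.
  have -> : frob_inner (Uplus + s *: D) (Uplus + s *: D) = A + 2%:R * s * B + s ^+ 2 * C.
    rewrite ipDl !ipDr !ipZl !ipZr /A /B /C (ip_sym D Uplus); ring.
  rewrite ipDr ipZr (ipDr gP) ipZr -/gF -/gP -/A -/gFD -/gPD -/w.
  move=> h.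
  suff -> : c1 * s
   + (lam / 2%:R * C + eta^-1 * (3%:R / 2%:R * (2%:R * A * C + 4%:R * B ^+ 2) + w * C)) * s ^+ 2
   + (eta^-1 * (3%:R / 2%:R * (4%:R * B * C))) * s ^+ 3
   + (eta^-1 * (3%:R / 2%:R * C ^+ 2)) * s ^+ 4 =
   (lam / 2%:R * (A + 2%:R * s * B + s ^+ 2 * C) +
       (frob_inner gF Uplus + s * gFD - frob_inner gF Ubar) +
       eta^-1 *
       (3%:R / 2%:R * (A + 2%:R * s * B + s ^+ 2 * C) ^+ 2 + w * (A + 2%:R * s * B + s ^+ 2 * C) -
        psi W Ubar - (frob_inner gP Uplus + s * gPD - frob_inner gP Ubar)))
   - (lam / 2%:R * A + (frob_inner gF Uplus - frob_inner gF Ubar) +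
       eta^-1 * (3%:R / 2%:R * A ^+ 2 + w * A - psi W Ubar - (frob_inner gP Uplus - frob_inner gP Ubar))).
    by rewrite subr_ge0.
  rewrite /c1; field; exact: etan0.
have c1ge0 : 0 <= c1.
  have : 0 <= C by apply: ip_ge0.
  by rewrite CE pmulr_rge0.
have c10 := @small_s _ _ _ _ _ hs c1ge0.
have D0 : D = 0 by apply: (ip_eq0 D); rewrite -/C CE c10 mulr0.
have GE : G = t0 *: Uplus by apply/eqP; rewrite eq_sym -subr_eq0 -/D D0.
have nG : frob_norm G ^+ 2 = t0 ^+ 2 * A by rewrite norm_sq GE ipZl ipZr -/A; ring.
have t00 : 0 <= t0 by rewrite /t0; apply: addr_ge0 => //; apply: mulr_ge0.
have t0E : t0 = a + 6%:R * A by [].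
have aE : lam * eta + 2%:R * w = a by [].
clearbody t0 a; clear hs CE c10 c1ge0 hmin.
split.
  exists t0; split => //; rewrite nG -/w aE t0E; ring.
move=> t t0ge; rewrite nG -/w aE => ht.
have [U0|Un0] := eqVneq Uplus 0.
  by rewrite GE U0 !scaler0.
have Apos : 0 < A.
  rewrite lt_def A0 andbT; apply/eqP => HA; by move: Un0; rewrite (ip_eq0 Uplus HA) eqxx.
have t0pos : 0 < t0 by rewrite t0E; apply: ltr_wpDl => //; apply: mulr_gt0.
have ht0 : t = t0 by rewrite t0E; apply: cubic_uniq => //; rewrite -t0E.
by rewrite ht0 GE scalerA mulVf ?gt_eqF // scale1r.
Qed.
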